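(* Let $q\in(0,1)$. Every fixed point $p\in\mathcal M_1^+$ of $\mathcal R_q$ other than $(1,0,0,\dots)$ satisfies $p_k>0$ for all $k\ge0$. None of these fixed points is reversible, i.e. for none of them does $T^{(q)}_{ij,k\ell}p_kp_\ell=T^{(q)}_{k\ell,ij}p_ip_j$ hold for all $i,j,k,\ell\ge0$.
   Context: $\mathcal M_1^+$ is the set of probability measures on $\mathbb N_0$, identified with nonnegative sequences summing to $1$. For $q\in[0,1]$, $$T^{(q)}_{ij,k\ell}=C^{(q)}_{k\ell}\,\delta_{i+j,k+\ell}\,(1+\min\{k,\ell,i,j\})\,q^{\max\{0,\ \min\{k,\ell\}-\min\{i,j\}\}},$$ with $0^0=1$ and $C^{(q)}_{k\ell}>0$ chosen so that $\sum_{i,j\ge0}T^{(q)}_{ij,k\ell}=1$. The recombinator on $\mathcal M_1^+$ is $\mathcal R_q(p)_i=\sum_{j,k,\ell\ge0}T^{(q)}_{ij,k\ell}p_kp_\ell$. *)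

(* Defs.v *)
From Stdlib Require Import Reals Arith.
From Coquelicot Require Import Coquelicot.
Open Scope R_scope.

Definition prob_measure (p : nat -> R) : Prop :=
  (forall k, 0 <= p k) /\ is_series p 1.

(* Unnormalized kernel:
   delta_{i+j,k+l} (1 + min{k,l,i,j}) q^{max(0, min{k,l} - min{i,j})}.
   Truncated nat subtraction gives max(0, .), and pow gives 0^0 = 1. *)
Definition T_un (q : R) (i j k l : nat) : R :=
  if Nat.eqb (i + j) (k + l)
  then INR (1 + Nat.min (Nat.min k l) (Nat.min i j))
       * q ^ (Nat.min k l - Nat.min i j)
  else 0.

Definition C_q (q : R) (k l : nat) : R :=
  / Series (fun i => Series (fun j => T_un q i j k l)).

Definition T_q (q : R) (i j k l : nat) : R := C_q q k l * T_un q i j k l.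

Definition recomb (q : R) (p : nat -> R) (i : nat) : R :=
  Series (fun j => Series (fun k => Series (fun l => T_q q i j k l * p k * p l))).

Definition dirac0 (k : nat) : R := if Nat.eqb k 0 then 1 else 0.

Definition reversible (q : R) (p : nat -> R) : Prop :=
  forall i j k l : nat, T_q q i j k l * p k * p l = T_q q k l i j * p i * p j.

(* Main.v *)
Require Import Defs.
From Stdlib Require Import Reals.
From Coquelicot Require Import Coquelicot.
From Stdlib Require Import Lra Lia Psatz FunctionalExtensionality.
Open Scope R_scope.

Lemma sum_zeros (a : nat -> R) N :
  (forall n, (n <= N)%nat -> a n = 0) -> sum_f_R0 a N = 0.
Proof.
  induction N as [|N IH]; intros H; simpl.
  - apply H; lia.
  - rewrite IH; [rewrite H; [lra|lia]|]. intros n Hn; apply H; lia.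
Qed.

Lemma sum_tail0 (a : nat -> R) N :
  (forall n, (N < n)%nat -> a n = 0) ->
  forall n, (N <= n)%nat -> sum_f_R0 a n = sum_f_R0 a N.
Proof.
  intros H n Hn. induction n as [|n IH].
  - replace N with 0%nat by lia. reflexivity.
  - destruct (Nat.eq_dec N (S n)) as [->|Hne]; [reflexivity|].
    simpl. rewrite IH by lia. rewrite H by lia. lra.
Qed.

Lemma is_series_fin (a : nat -> R) N :
  (forall n, (N < n)%nat -> a n = 0) -> is_series a (sum_f_R0 a N).
Proof.
  intros H. apply is_series_Reals. intros eps Heps. exists N.
  intros n Hn. rewrite (sum_tail0 a N H n Hn). unfold Rdist.
  rewrite Rminus_diag, Rabs_R0. lra.
Qed.

Lemma Series_fin (a : nat -> R) N :
  (forall n, (N < n)%nat -> a n = 0) -> Series a = sum_f_R0 a N.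
Proof. intros H. apply is_series_unique, is_series_fin, H. Qed.

Lemma sum_single (a : nat -> R) m N :
  (forall n, n <> m -> a n = 0) -> (m <= N)%nat -> sum_f_R0 a N = a m.
Proof.
  intros H. induction N as [|N IH]; intros Hm.
  - replace m with 0%nat by lia. reflexivity.
  - simpl. destruct (Nat.eq_dec m (S N)) as [->|Hne].
    + rewrite sum_zeros; [lra|]. intros n Hn; apply H; lia.
    + rewrite IH by lia. rewrite (H (S N)) by lia. lra.
Qed.

Lemma Series_single (a : nat -> R) m :
  (forall n, n <> m -> a n = 0) -> Series a = a m.
Proof.
  intros H. rewrite (Series_fin a m).
  - apply sum_single; auto.
  - intros n Hn; apply H; lia.
Qed.

Lemma sum_ge_term (a : nat -> R) N k :
  (forall n, 0 <= a n) -> (k <= N)%nat -> a k <= sum_f_R0 a N.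
Proof.
  intros H. induction N as [|N IH]; intros Hk.
  - replace k with 0%nat by lia. simpl; lra.
  - simpl. destruct (Nat.eq_dec k (S N)) as [->|Hne].
    + assert (0 <= sum_f_R0 a N) by (apply cond_pos_sum; auto). lra.
    + specialize (IH ltac:(lia)). specialize (H (S N)). lra.
Qed.

Lemma Series_ge_term (a : nat -> R) k :
  (forall n, 0 <= a n) -> ex_series a -> a k <= Series a.
Proof.
  intros H He. apply Rle_trans with (sum_f_R0 a k).
  - apply sum_ge_term; auto.
  - apply sum_incr; auto.
    apply is_series_Reals. apply Series_correct, He.
Qed.

Lemma T_un_nonneg q i j k l : 0 < q -> 0 <= T_un q i j k l.
Proof.
  intros Hq. unfold T_un. destruct (Nat.eqb _ _); [|lra].
  apply Rmult_le_pos; [apply pos_INR|apply pow_le; lra].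
Qed.

Lemma T_un_pos q i j k l : 0 < q -> (i + j = k + l)%nat -> 0 < T_un q i j k l.
Proof.
  intros Hq E. unfold T_un. rewrite (proj2 (Nat.eqb_eq _ _) E).
  apply Rmult_lt_0_compat; [apply lt_0_INR; lia|apply pow_lt; lra].
Qed.

Lemma T_un_off q i j k l : (i + j <> k + l)%nat -> T_un q i j k l = 0.
Proof.
  intros E. unfold T_un. rewrite (proj2 (Nat.eqb_neq _ _) E). reflexivity.
Qed.

Definition Ssum q k l := sum_f_R0 (fun i => T_un q i (k + l - i) k l) (k + l).

Lemma C_q_eq q k l : C_q q k l = / Ssum q k l.
Proof.
  unfold C_q, Ssum. f_equal.
  rewrite (Series_ext _ (fun i => T_un q i (k + l - i) k l)).
  - apply Series_fin. intros n Hn. apply T_un_off. lia.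
  - intros i. apply (Series_single (fun j => T_un q i j k l)). intros j Hj. apply T_un_off. lia.
Qed.

Lemma Ssum_pos q k l : 0 < q -> 0 < Ssum q k l.
Proof.
  intros Hq. unfold Ssum.
  apply Rlt_le_trans with (T_un q 0 (k + l - 0) k l).
  - apply T_un_pos; auto; lia.
  - apply (sum_ge_term (fun i => T_un q i (k + l - i) k l)); [intros; apply T_un_nonneg; auto|lia].
Qed.

Lemma T_q_nonneg q i j k l : 0 < q -> 0 <= T_q q i j k l.
Proof.
  intros Hq. unfold T_q. rewrite C_q_eq. apply Rmult_le_pos.
  - left; apply Rinv_0_lt_compat, Ssum_pos; auto.
  - apply T_un_nonneg; auto.
Qed.

Lemma T_q_pos q i j k l : 0 < q -> (i + j = k + l)%nat -> 0 < T_q q i j k l.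
Proof.
  intros Hq E. unfold T_q. rewrite C_q_eq. apply Rmult_lt_0_compat.
  - apply Rinv_0_lt_compat, Ssum_pos; auto.
  - apply T_un_pos; auto.
Qed.

Lemma T_q_off q i j k l : (i + j <> k + l)%nat -> T_q q i j k l = 0.
Proof. intros E. unfold T_q. rewrite T_un_off; auto. lra. Qed.

Lemma T_q_le1 q i j k l : 0 < q -> T_q q i j k l <= 1.
Proof.
  intros Hq. destruct (Nat.eq_dec (i + j) (k + l)) as [E|E].
  - unfold T_q. rewrite C_q_eq. pose proof (Ssum_pos q k l Hq) as HS.
    assert (T_un q i j k l <= Ssum q k l).
    { unfold Ssum. replace j with (k + l - i)%nat by lia.
      apply (sum_ge_term (fun i0 => T_un q i0 (k + l - i0) k l)).
      - intros; apply T_un_nonneg; auto.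
      - lia. }
    apply Rle_trans with (/ Ssum q k l * Ssum q k l).
    + apply Rmult_le_compat_l; auto. left; apply Rinv_0_lt_compat; auto.
    + rewrite Rinv_l; lra.
  - rewrite T_q_off; auto; lra.
Qed.

Definition g q p i j :=
  sum_f_R0 (fun k => T_q q i j k (i + j - k) * p k * p (i + j - k)%nat) (i + j).

Lemma recomb_eq q p i : recomb q p i = Series (fun j => g q p i j).
Proof.
  unfold recomb. apply Series_ext. intros j.
  rewrite (Series_ext _ (fun k => T_q q i j k (i + j - k) * p k * p (i + j - k)%nat)).
  - apply Series_fin. intros n Hn. rewrite T_q_off by lia. lra.
  - intros k. apply (Series_single (fun l => T_q q i j k l * p k * p l)).
    intros l Hl. rewrite T_q_off by lia. lra.
Qed.

Definition cauchy (p : nat -> R) n := sum_f_R0 (fun k => p k * p (n - k)%nat) n.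

Lemma g_nonneg q p i j : 0 < q -> (forall k, 0 <= p k) -> 0 <= g q p i j.
Proof.
  intros Hq Hp. apply cond_pos_sum. intros k.
  apply Rmult_le_pos; [apply Rmult_le_pos|]; auto. apply T_q_nonneg; auto.
Qed.

Lemma g_le q p i j : 0 < q -> (forall k, 0 <= p k) -> g q p i j <= cauchy p (i + j).
Proof.
  intros Hq Hp. unfold g, cauchy. apply sum_growing. intros k.
  pose proof (T_q_le1 q i j k (i + j - k) Hq).
  pose proof (T_q_nonneg q i j k (i + j - k) Hq).
  pose proof (Hp k). pose proof (Hp (i + j - k)%nat).
  assert (0 <= p k * p (i + j - k)%nat) by (apply Rmult_le_pos; auto).
  rewrite Rmult_assoc. nra.
Qed.

Lemma g_ex q p i : 0 < q -> prob_measure p -> ex_series (fun j => g q p i j).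
Proof.
  intros Hq [Hp Hs].
  apply (@ex_series_le R_AbsRing R_CompleteNormedModule _ (fun j => cauchy p (i + j))).
  - intros n. change (norm (g q p i n)) with (Rabs (g q p i n)).
    rewrite Rabs_pos_eq by (apply g_nonneg; auto). apply g_le; auto.
  - apply (ex_series_incr_n (fun n => cauchy p n) i).
    eexists. apply (is_series_mult_pos p p 1 1); auto.
Qed.

Lemma KI q p i j k : 0 < q -> prob_measure p -> (forall i, recomb q p i = p i) ->
  (k <= i + j)%nat -> T_q q i j k (i + j - k) * p k * p (i + j - k)%nat <= p i.
Proof.
  intros Hq Hpm Hfix Hk. pose proof Hpm as [Hp _].
  apply Rle_trans with (recomb q p i); [|rewrite Hfix; lra].
  rewrite recomb_eq.
  apply Rle_trans with (g q p i j).
  - unfold g. apply (sum_ge_term (fun k => T_q q i j k (i + j - k) * p k * p (i + j - k)%nat)); auto.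
    intros n. apply Rmult_le_pos; [apply Rmult_le_pos|]; auto. apply T_q_nonneg; auto.
  - apply (Series_ge_term (fun j => g q p i j)).
    + intros; apply g_nonneg; auto.
    + apply g_ex; auto.
Qed.

Lemma Sval q k l v : Ssum q k l = v -> C_q q k l = / v.
Proof. intros H. rewrite C_q_eq, H. reflexivity. Qed.

Theorem proposition15 (q : R) (hq : 0 < q < 1) (p : nat -> R) :
  prob_measure p ->
  (forall i, recomb q p i = p i) ->
  p <> dirac0 ->
  (forall k, 0 < p k) /\ ~ reversible q p.
Proof.
  intros Hpm Hfix Hnd.
  assert (Hq : 0 < q) by lra.
  pose proof Hpm as [Hp Hs].
  assert (HK := fun i j k => KI q p i j k Hq Hpm Hfix).
  assert (Hm : exists m, 0 < p m).
  { destruct (Classical_Prop.classic (exists m, 0 < p m)) as [H|H]; auto.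
    exfalso. assert (Hz : forall m, p m = 0).
    { intros m. destruct (Hp m); auto. exfalso; apply H; eauto. }
    pose proof (is_series_unique _ _ Hs) as E.
    rewrite (Series_fin p 0) in E by (intros; apply Hz). simpl in E.
    rewrite Hz in E. lra. }
  assert (Hl : exists l, (1 <= l)%nat /\ 0 < p l).
  { destruct (Classical_Prop.classic (exists l, (1 <= l)%nat /\ 0 < p l)) as [H|H]; auto.
    exfalso. assert (Hz : forall m, (0 < m)%nat -> p m = 0).
    { intros m Hm0. destruct (Hp m); auto. exfalso; apply H; exists m; split; auto. }
    pose proof (is_series_unique _ _ Hs) as E.
    rewrite (Series_fin p 0) in E by (intros; apply Hz; auto). simpl in E.
    apply Hnd. apply functional_extensionality. intros [|m]; simpl.
    - exact E.
    - apply Hz; lia. }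
  assert (Hunb : forall n, exists l, (n <= l)%nat /\ (1 <= l)%nat /\ 0 < p l).
  { induction n as [|n [l [H1 [H2 H3]]]].
    - destruct Hl as [l [H1 H2]]. exists l; repeat split; auto; lia.
    - exists (2 * l)%nat. repeat split; try lia.
      pose proof (HK (2 * l)%nat 0%nat l ltac:(lia)) as H.
      replace (2 * l + 0 - l)%nat with l in H by lia.
      pose proof (T_q_pos q (2 * l) 0 l l Hq ltac:(lia)).
      assert (0 < p l * p l) by (apply Rmult_lt_0_compat; auto).
      rewrite Rmult_assoc in H. 
      assert (0 < T_q q (2 * l) 0 l l * (p l * p l)) by (apply Rmult_lt_0_compat; auto).
      lra. }
  assert (H0 : 0 < p 0%nat).
  { destruct Hm as [m Hm].
    pose proof (HK 0%nat (2 * m)%nat m ltac:(lia)) as H.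
    replace (0 + 2 * m - m)%nat with m in H by lia.
    pose proof (T_q_pos q 0 (2 * m) m m Hq ltac:(lia)).
    assert (0 < p m * p m) by (apply Rmult_lt_0_compat; auto).
    rewrite Rmult_assoc in H.
    assert (0 < T_q q 0 (2 * m) m m * (p m * p m)) by (apply Rmult_lt_0_compat; auto).
    lra. }
  assert (Hpos : forall k, 0 < p k).
  { intros i. destruct (Hunb i) as [l [H1 [_ H3]]].
    pose proof (HK i (l - i)%nat 0%nat ltac:(lia)) as H.
    replace (i + (l - i) - 0)%nat with l in H by lia.
    pose proof (T_q_pos q i (l - i) 0 l Hq ltac:(lia)).
    assert (0 < p 0%nat * p l) by (apply Rmult_lt_0_compat; auto).
    rewrite Rmult_assoc in H.
    assert (0 < T_q q i (l - i) 0 l * (p 0%nat * p l)) by (apply Rmult_lt_0_compat; auto).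
    lra. }
  split; [exact Hpos|].
  intros Hrev.
  pose proof (Hrev 0%nat 2%nat 1%nat 1%nat) as E1.
  pose proof (Hrev 0%nat 3%nat 1%nat 2%nat) as E2.
  pose proof (Hrev 1%nat 3%nat 2%nat 2%nat) as E3.
  unfold T_q, T_un in E1, E2, E3. simpl in E1, E2, E3.
  rewrite (Sval q 1 1 (2 + 2 * q)) in E1 by (unfold Ssum, T_un; simpl; ring).
  rewrite (Sval q 0 2 3) in E1 by (unfold Ssum, T_un; simpl; ring).
  rewrite (Sval q 1 2 (4 + 2 * q)) in E2 by (unfold Ssum, T_un; simpl; ring).
  rewrite (Sval q 0 3 4) in E2 by (unfold Ssum, T_un; simpl; ring).
  rewrite (Sval q 2 2 (3 + 4 * q + 2 * q ^ 2)) in E3 by (unfold Ssum, T_un; simpl; ring).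
  rewrite (Sval q 1 3 (6 + 2 * q)) in E3 by (unfold Ssum, T_un; simpl; ring).
  pose proof (Hpos 0%nat) as P0. pose proof (Hpos 1%nat) as P1.
  pose proof (Hpos 2%nat) as P2. pose proof (Hpos 3%nat) as P3.
  set (a0 := p 0%nat) in *. set (a1 := p 1%nat) in *.
  set (a2 := p 2%nat) in *. set (a3 := p 3%nat) in *.
  assert (F1 : q * a1 * a1 * 3 = a0 * a2 * (2 + 2 * q)).
  { apply (Rmult_eq_compat_l (3 * (2 + 2 * q))) in E1.
    field_simplify in E1. idtac.
    all: try lra. }
  assert (F2 : q * a1 * a2 * 4 = a0 * a3 * (4 + 2 * q)).
  { apply (Rmult_eq_compat_l (4 * (4 + 2 * q))) in E2.
    field_simplify in E2.
    all: try lra. }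
  assert (Hs22 : 0 < 3 + 4 * q + 2 * q ^ 2) by nra.
  assert (F3 : q * a2 * a2 * (6 + 2 * q) = a1 * a3 * (3 + 4 * q + 2 * q ^ 2)).
  { apply (Rmult_eq_compat_l ((6 + 2 * q) * (3 + 4 * q + 2 * q ^ 2))) in E3.
    field_simplify in E3.
    all: try lra. }
  set (S22 := 3 + 4 * q + 2 * q ^ 2) in *.
  assert (G1 : q * a2 * (a2 * a0 * (6 + 2 * q) * (4 + 2 * q)) = q * a2 * (a1 * a1 * 4 * S22)).
  { transitivity ((q * a2 * a2 * (6 + 2 * q)) * (a0 * (4 + 2 * q))); [ring|].
    rewrite F3. transitivity (a1 * S22 * (a0 * a3 * (4 + 2 * q))); [ring|].
    rewrite <- F2. ring. }
  apply Rmult_eq_reg_l in G1; [|apply Rgt_not_eq, Rmult_lt_0_compat; auto].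
  assert (G2 : a1 * a1 * (3 * q * (6 + 2 * q) * (4 + 2 * q)) = a1 * a1 * (4 * S22 * (2 + 2 * q))).
  { transitivity ((q * a1 * a1 * 3) * ((6 + 2 * q) * (4 + 2 * q))); [ring|].
    rewrite F1. transitivity ((a2 * a0 * (6 + 2 * q) * (4 + 2 * q)) * (2 + 2 * q)); [ring|].
    rewrite G1. ring. }
  apply Rmult_eq_reg_l in G2; [|apply Rgt_not_eq, Rmult_lt_0_compat; auto].
  unfold S22 in G2.
  assert (0 < (1 - q) * (6 + 2 * q - q * q)) by (apply Rmult_lt_0_compat; nra).
  nra.
Qed.
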